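(* Let $k,d,n\in\mathbb N$, $Q,K,V\in\mathbb R^{k\times d}$, $A:=K^\top Q/\sqrt{k}$ and $R>0$. Then the self-attention map $f$ with parameters $(A,V)$ is Lipschitz continuous on $B_R^n$ (with respect to the Frobenius norm on input and output), and $$\mathrm{Lip}\big(f_{|B_R^n}\big)\le \sqrt{3}\,\|V\|_2\big(\|A\|_2^2R^4(4n+1)+n\big)^{1/2}.$$
   Context: For $X=(x_1,\dots,x_n)\in(\mathbb R^d)^n$, self-attention with parameters $(A,V)$ is $f(X)=\big(V\sum_{j=1}^nP_{ij}x_j\big)_{1\le i\le n}\in(\mathbb R^k)^n$, where $P_{ij}=\exp(x_i^\top A^\top x_j)/\sum_{l=1}^n\exp(x_i^\top A^\top x_l)$. The spaces $(\mathbb R^d)^n$ and $(\mathbb R^k)^n$ carry the Frobenius norm $\|X\|_F=(\sum_i|x_i|^2)^{1/2}$, where $|\cdot|$ is the Euclidean norm. $B_R\subset\mathbb R^d$ is the closed Euclidean ball of center $0$ and radius $R$. For $\mathcal X\subset(\mathbb R^d)^n$, $\mathrm{Lip}(f_{|\mathcal X})=\sup_{X\ne Y\in\mathcal X}\|f(X)-f(Y)\|_F/\|X-Y\|_F$. $\|\cdot\|_2$ denotes the spectral (operator) norm of a matrix. *)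

(* Defs.v *)
From mathcomp Require Import all_boot all_order all_algebra.
From mathcomp Require Import all_classical all_reals all_analysis.
Set Implicit Arguments. Unset Strict Implicit. Unset Printing Implicit Defensive.
Import Order.TTheory GRing.Theory Num.Theory.
Local Open Scope ring_scope.
Local Open Scope classical_set_scope.

Section Attn.
Variable R : realType.

Definition vnorm (m : nat) (v : 'cV[R]_m) : R := Num.sqrt (\sum_(i < m) v i 0 ^+ 2).

(* A sequence X = (x_1,...,x_n) in (R^m)^n is a function 'I_n -> 'cV_m;
   Frobenius norm ||X||_F = (sum_i |x_i|^2)^(1/2) *)
Definition frob (m n : nat) (X : 'I_n -> 'cV[R]_m) : R :=
  Num.sqrt (\sum_(i < n) vnorm (X i) ^+ 2).

Definition specnorm (p q : nat) (M : 'M[R]_(p, q)) : R :=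
  sup [set vnorm (M *m x) | x in [set x : 'cV[R]_q | vnorm x <= 1]].

Definition attnP (d n : nat) (A : 'M[R]_d) (X : 'I_n -> 'cV[R]_d) (i j : 'I_n) : R :=
  expR (((X i)^T *m A^T *m X j) 0 0) /
  \sum_(l < n) expR (((X i)^T *m A^T *m X l) 0 0).

Definition selfattn (k d n : nat) (A : 'M[R]_d) (V : 'M[R]_(k, d))
  (X : 'I_n -> 'cV[R]_d) : 'I_n -> 'cV[R]_k :=
  fun i => V *m (\sum_(j < n) attnP A X i j *: X j).

End Attn.

(* Main.v *)
Require Import Defs.
From mathcomp Require Import all_boot all_order all_algebra.
From mathcomp Require Import all_classical all_reals all_analysis.
From mathcomp Require Import ring lra.
Import Order.TTheory GRing.Theory Num.Theory.
Set Implicit Arguments. Unset Strict Implicit.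
Local Open Scope ring_scope.

Section Helpers.
Variable R : realType.

Lemma cs_w (m : nat) (w a b : 'I_m -> R) : (forall i, 0 <= w i) ->
  (\sum_i w i * a i * b i) ^+ 2 <=
  (\sum_i w i * a i ^+ 2) * (\sum_i w i * b i ^+ 2).
Proof.
move=> w0.
set Aa := \sum_i w i * a i ^+ 2.
set B := \sum_i w i * b i ^+ 2.
set C := \sum_i w i * a i * b i.
have B0 : 0 <= B by apply: sumr_ge0 => i _; apply: mulr_ge0 => //; exact: sqr_ge0.
have key : \sum_i w i * (B * a i - C * b i) ^+ 2 = B * (B * Aa - C ^+ 2).
  transitivity (\sum_i (B ^+ 2 * (w i * a i ^+ 2) - (2 * B * C) * (w i * a i * b i)
     + C ^+ 2 * (w i * b i ^+ 2))).
    by apply: eq_bigr => i _; ring.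
  rewrite big_split /= sumrB -!mulr_sumr -/Aa -/B -/C; ring.
have : 0 <= B * (B * Aa - C ^+ 2).
  rewrite -key; apply: sumr_ge0 => i _; apply: mulr_ge0 => //; exact: sqr_ge0.
have [B00|Bn0] := eqVneq B 0.
  move=> _.
  have wb : forall i, w i * b i = 0.
    move=> i.
    have := @psumr_eq0P _ _ predT (fun i => w i * b i ^+ 2) (fun i _ => mulr_ge0 (w0 i) (sqr_ge0 (b i))).
    move=> /(_ B00 i isT) /= h.
    have : (w i * b i) ^+ 2 = 0.
      have -> : (w i * b i) ^+ 2 = w i * (w i * b i ^+ 2) by ring.
      by rewrite h mulr0.
    by move/eqP; rewrite sqrf_eq0 => /eqP.
  have -> : C = 0.
    rewrite /C big1 // => i _; by rewrite mulrAC wb mul0r.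
  by rewrite B00 mulr0 expr0n.
move=> h.
have Bp : 0 < B by rewrite lt_def Bn0 B0.
rewrite pmulr_rge0 // subr_ge0 in h.
by rewrite mulrC.
Qed.


Definition dot (m : nat) (u v : 'cV[R]_m) : R := \sum_(l < m) u l 0 * v l 0.

Lemma dot_ge0 m (u : 'cV[R]_m) : 0 <= dot u u.
Proof. by apply: sumr_ge0 => l _; rewrite -expr2 sqr_ge0. Qed.

Lemma vnormE m (u : 'cV[R]_m) : vnorm u = Num.sqrt (dot u u).
Proof. by rewrite /vnorm /dot; congr Num.sqrt; apply: eq_bigr => l _; rewrite expr2. Qed.

Lemma vnorm_ge0 m (u : 'cV[R]_m) : 0 <= vnorm u.
Proof. by rewrite vnormE sqrtr_ge0. Qed.

Lemma vnorm_sq m (u : 'cV[R]_m) : vnorm u ^+ 2 = dot u u.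
Proof. by rewrite vnormE sqr_sqrtr // dot_ge0. Qed.

Lemma dotC m (u v : 'cV[R]_m) : dot u v = dot v u.
Proof. by apply: eq_bigr => l _; rewrite mulrC. Qed.

Lemma dotDl m (u v w : 'cV[R]_m) : dot (u + v) w = dot u w + dot v w.
Proof. by rewrite /dot -big_split; apply: eq_bigr => l _; rewrite !mxE mulrDl. Qed.

Lemma dotDr m (u v w : 'cV[R]_m) : dot w (u + v) = dot w u + dot w v.
Proof. by rewrite dotC dotDl !(dotC w). Qed.

Lemma dotZl m a (u w : 'cV[R]_m) : dot (a *: u) w = a * dot u w.
Proof. by rewrite /dot mulr_sumr; apply: eq_bigr => l _; rewrite !mxE mulrA. Qed.

Lemma dotZr m a (u w : 'cV[R]_m) : dot w (a *: u) = a * dot w u.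
Proof. by rewrite dotC dotZl dotC. Qed.

Lemma dotNl m (u w : 'cV[R]_m) : dot (- u) w = - dot u w.
Proof. by rewrite -scaleN1r dotZl mulN1r. Qed.

Lemma dotNr m (u w : 'cV[R]_m) : dot w (- u) = - dot w u.
Proof. by rewrite dotC dotNl dotC. Qed.

Lemma dotBl m (u v w : 'cV[R]_m) : dot (u - v) w = dot u w - dot v w.
Proof. by rewrite dotDl dotNl. Qed.

Lemma dotBr m (u v w : 'cV[R]_m) : dot w (u - v) = dot w u - dot w v.
Proof. by rewrite dotDr dotNr. Qed.

Lemma dot_suml m n (F : 'I_n -> 'cV[R]_m) w :
  dot (\sum_j F j) w = \sum_j dot (F j) w.
Proof.
rewrite /dot exchange_big /=; apply: eq_bigr => l _.
by rewrite summxE mulr_suml.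
Qed.

Lemma dot_sumr m n (F : 'I_n -> 'cV[R]_m) w :
  dot w (\sum_j F j) = \sum_j dot w (F j).
Proof. by rewrite dotC dot_suml; apply: eq_bigr => j _; rewrite dotC. Qed.

Lemma dot_cs2 m (u v : 'cV[R]_m) : dot u v ^+ 2 <= dot u u * dot v v.
Proof.
have := @cs_w m (fun _ => 1) (fun l => u l 0) (fun l => v l 0) (fun _ => ler01).
rewrite /dot.
under eq_bigr do rewrite mul1r.
under [X in _ <= X * _]eq_bigr do rewrite mul1r expr2.
by under [X in _ <= _ * X]eq_bigr do rewrite mul1r expr2.
Qed.

Lemma dot_abs_cs m (u v : 'cV[R]_m) : `|dot u v| <= vnorm u * vnorm v.
Proof.
rewrite !vnormE -sqrtrM ?dot_ge0 // -sqrtr_sqr ler_sqrt ?dot_cs2 //.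
by apply: mulr_ge0; apply: dot_ge0.
Qed.

Lemma dot_cs m (u v : 'cV[R]_m) : dot u v <= vnorm u * vnorm v.
Proof. exact: le_trans (ler_norm _) (dot_abs_cs u v). Qed.

Lemma vnorm_le m (u : 'cV[R]_m) c : 0 <= c -> dot u u <= c ^+ 2 -> vnorm u <= c.
Proof. by move=> c0 h; rewrite vnormE -(ger0_norm c0) -sqrtr_sqr ler_sqrt // sqr_ge0. Qed.

Lemma vnormD m (u v : 'cV[R]_m) : vnorm (u + v) <= vnorm u + vnorm v.
Proof.
apply: vnorm_le; first by apply: addr_ge0; apply: vnorm_ge0.
rewrite dotDl !dotDr (dotC v u) -!vnorm_sq.
have := dot_cs u v; nra.
Qed.

Lemma vnormZ m a (u : 'cV[R]_m) : vnorm (a *: u) = `|a| * vnorm u.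
Proof.
rewrite !vnormE dotZl dotZr mulrA -expr2 sqrtrM ?sqr_ge0 //.
by rewrite sqrtr_sqr.
Qed.

Lemma vnormN m (u : 'cV[R]_m) : vnorm (- u) = vnorm u.
Proof. by rewrite -scaleN1r vnormZ normrN normr1 mul1r. Qed.

Lemma vnormB m (u v : 'cV[R]_m) : vnorm (u - v) <= vnorm u + vnorm v.
Proof. by rewrite -(vnormN v) vnormD. Qed.


Lemma vnorm0 m : vnorm (0 : 'cV[R]_m) = 0.
Proof. by rewrite vnormE /dot big1 ?sqrtr0 // => l _; rewrite mxE mul0r. Qed.

Lemma mulmx_rows p q (M : 'M[R]_(p, q)) (v : 'cV[R]_q) :
  vnorm (M *m v) <= Num.sqrt (\sum_i dot (\col_l M i l) (\col_l M i l)) * vnorm v.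
Proof.
apply: vnorm_le; first by apply: mulr_ge0; [exact: sqrtr_ge0 | exact: vnorm_ge0].
rewrite exprMn sqr_sqrtr; last by apply: sumr_ge0 => i _; exact: dot_ge0.
rewrite vnorm_sq mulr_suml /dot; apply: ler_sum => i _.
have -> : (M *m v) i 0 = dot (\col_l M i l) v.
  by rewrite mxE /dot; apply: eq_bigr => l _; rewrite mxE.
rewrite -expr2; exact: dot_cs2.
Qed.

Lemma specnorm_ub p q (M : 'M[R]_(p, q)) :
  has_ubound [set vnorm (M *m x) | x in [set x : 'cV[R]_q | vnorm x <= 1]].
Proof.
exists (Num.sqrt (\sum_i dot (\col_l M i l) (\col_l M i l))) => y [x hx <-].
apply: le_trans (mulmx_rows M x) _.
rewrite -[X in _ <= X]mulr1; apply: ler_wpM2l => //; exact: sqrtr_ge0.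
Qed.

Lemma specnorm_ge0 p q (M : 'M[R]_(p, q)) : 0 <= specnorm M.
Proof.
rewrite /specnorm; apply: (ub_le_sup (specnorm_ub M)).
exists 0; first by rewrite /= vnorm0 ler01.
by rewrite mulmx0 vnorm0.
Qed.

Lemma specnorm_bound p q (M : 'M[R]_(p, q)) (v : 'cV[R]_q) :
  vnorm (M *m v) <= specnorm M * vnorm v.
Proof.
have [v0|vn0] := eqVneq (vnorm v) 0.
  apply: le_trans (mulmx_rows M v) _.
  by rewrite v0 !mulr0.
have vp : 0 < vnorm v by rewrite lt_def vn0 vnorm_ge0.
set x := (vnorm v)^-1 *: v.
have hx : vnorm x = 1 by rewrite /x vnormZ ger0_norm ?invr_ge0 ?vnorm_ge0 // mulVf.
have : vnorm (M *m x) <= specnorm M.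
  rewrite /specnorm; apply: (ub_le_sup (specnorm_ub M)).
  by exists x => //=; rewrite hx.
rewrite /x -scalemxAr vnormZ ger0_norm ?invr_ge0 ?vnorm_ge0 //.
by rewrite -(ler_pM2l vp) mulrA mulfV // mul1r mulrC.
Qed.


Lemma prod_le (x y bx b_y : R) : `|x| <= bx -> `|y| <= b_y -> x * y <= bx * b_y.
Proof.
move=> hx hy; apply: le_trans (ler_norm (x * y)) _.
by rewrite normrM; apply: ler_pM.
Qed.

Lemma variance m n (p : 'I_n -> R) (Z : 'I_n -> 'cV[R]_m) :
  \sum_j p j = 1 ->
  \sum_j p j * dot (Z j - \sum_l p l *: Z l) (Z j - \sum_l p l *: Z l) =
  \sum_j p j * dot (Z j) (Z j) - dot (\sum_l p l *: Z l) (\sum_l p l *: Z l).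
Proof.
move=> hp1; set E := \sum_l p l *: Z l.
have hE : \sum_j p j * dot (Z j) E = dot E E.
  by rewrite /E dot_suml; apply: eq_bigr => j _; rewrite dotZl.
transitivity (\sum_j (p j * dot (Z j) (Z j) - 2 * (p j * dot (Z j) E) + dot E E * p j)).
  apply: eq_bigr => j _; rewrite !dotBl !dotBr (dotC E (Z j)); ring.
rewrite big_split /= sumrB -mulr_sumr -mulr_sumr hE hp1; ring.
Qed.

Lemma row_bound d n (p : 'I_n -> R) (Z H : 'I_n -> 'cV[R]_d) (g hi zi : 'cV[R]_d)
  (A : 'M[R]_d) (r : R) (s' : 'I_n -> R) :
  0 < r -> (forall j, 0 <= p j) -> \sum_j p j = 1 ->
  (forall j, vnorm (Z j) <= r) -> vnorm zi <= r ->
  (forall j, s' j = dot (A *m hi) (Z j) + dot (A *m zi) (H j)) ->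
  \sum_j (p j * dot g (H j) + dot g (Z j) * (p j * (s' j - \sum_l p l * s' l)))
  <= vnorm g * ((\sum_j p j * vnorm (H j)) + specnorm A * r ^+ 2 * vnorm hi
       + 2 * specnorm A * r ^+ 2 * (\sum_j p j * vnorm (H j))).
Proof.
move=> r0 hp0 hp1 hZ hzi hs.
set a := specnorm A.
have a0 : 0 <= a := specnorm_ge0 A.
set E := \sum_l p l *: Z l.
set W := fun j => Z j - E.
set t1 := \sum_j p j * vnorm (H j).
set m := \sum_l p l * s' l.
have hsum0 : \sum_j p j * dot g (W j) = 0.
  transitivity (\sum_j p j * dot g (Z j) - dot g E * \sum_j p j).
    rewrite mulr_sumr -sumrB; apply: eq_bigr => j _; rewrite /W dotBr; ring.
  rewrite hp1 mulr1 /E dot_sumr; apply/eqP; rewrite subr_eq0; apply/eqP; apply: eq_bigr => j _; by rewrite dotZr.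
have hvar := variance Z hp1.
have hZZ : \sum_j p j * dot (Z j) (Z j) <= r ^+ 2.
  apply: le_trans (_ : \sum_j p j * r ^+ 2 <= _).
    apply: ler_sum => j _; apply: ler_wpM2l => //.
    rewrite -vnorm_sq; apply: ler_pM => //; try exact: vnorm_ge0.
  by rewrite -mulr_suml hp1 mul1r.
have hW0 : 0 <= \sum_j p j * dot (W j) (W j).
  by apply: sumr_ge0 => j _; apply: mulr_ge0 => //; exact: dot_ge0.
have hWr : \sum_j p j * dot (W j) (W j) <= r ^+ 2.
  rewrite /W -/E in hvar *; rewrite hvar.
  have := dot_ge0 E; lra.
have hEr : vnorm E <= r.
  apply: vnorm_le; first exact: ltW.
  move: hvar hW0 hZZ; rewrite /W -/E => ->; lra.
have hWj : forall j, vnorm (W j) <= 2 * r.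
  move=> j; apply: le_trans (vnormB _ _) _; have := hZ j; lra.
have e2 : \sum_j dot g (Z j) * (p j * (s' j - m)) =
          \sum_j p j * dot g (W j) * s' j.
  have hc : \sum_j p j * dot g (Z j) = dot g E.
    by rewrite /E dot_sumr; apply: eq_bigr => j _; rewrite dotZr.
  transitivity (\sum_j p j * dot g (Z j) * s' j - m * \sum_j p j * dot g (Z j)).
    rewrite mulr_sumr -sumrB; apply: eq_bigr => j _; ring.
  transitivity (\sum_j p j * dot g (Z j) * s' j - dot g E * m); first by rewrite hc mulrC.
  rewrite /m mulr_sumr -sumrB; apply: eq_bigr => j _; rewrite /W dotBr; ring.
rewrite big_split /= e2.
have e3 : \sum_j p j * dot g (W j) * s' j =
   \sum_j p j * (dot g (W j) * dot (A *m hi) (W j))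
   + \sum_j p j * (dot g (W j) * dot (A *m zi) (H j)).
  transitivity (\sum_j (p j * (dot g (W j) * dot (A *m hi) (W j))
     + p j * (dot g (W j) * dot (A *m zi) (H j)) + dot (A *m hi) E * (p j * dot g (W j)))).
    apply: eq_bigr => j _; rewrite hs /W !dotBr; ring.
  by rewrite !big_split /= -mulr_sumr hsum0 mulr0 addr0.
rewrite e3.
have b1 : \sum_j p j * dot g (H j) <= vnorm g * t1.
  rewrite /t1 mulr_sumr; apply: ler_sum => j _.
  rewrite mulrCA; apply: ler_wpM2l => //; exact: dot_cs.
have b2 : \sum_j p j * (dot g (W j) * dot (A *m hi) (W j))
          <= vnorm g * (a * r ^+ 2 * vnorm hi).
  apply: le_trans (_ : \sum_j p j * ((vnorm g * (a * vnorm hi)) * dot (W j) (W j)) <= _).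
    apply: ler_sum => j _; apply: ler_wpM2l => //.
    rewrite -vnorm_sq expr2 mulrACA; apply: prod_le; first exact: dot_abs_cs.
    apply: le_trans (dot_abs_cs _ _) _; apply: ler_wpM2r; first exact: vnorm_ge0.
    exact: specnorm_bound.
  have hg := vnorm_ge0 g; have hh := vnorm_ge0 hi.
  under eq_bigr do rewrite mulrCA.
  rewrite -mulr_sumr.
  have : 0 <= vnorm g * (a * vnorm hi) by apply: mulr_ge0 => //; apply: mulr_ge0.
  move: hWr; set Sw := \sum_j _. nra.
have b3 : \sum_j p j * (dot g (W j) * dot (A *m zi) (H j))
          <= vnorm g * (2 * a * r ^+ 2 * t1).
  rewrite /t1 !mulr_sumr; apply: ler_sum => j _.
  have hg := vnorm_ge0 g; have hh := vnorm_ge0 (H j).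
  apply: le_trans (_ : p j * ((vnorm g * (2 * r)) * (a * r * vnorm (H j))) <= _).
    apply: ler_wpM2l => //; apply: prod_le.
      apply: le_trans (dot_abs_cs _ _) _; apply: ler_wpM2l => //.
    apply: le_trans (dot_abs_cs _ _) _; apply: ler_wpM2r => //.
    apply: le_trans (specnorm_bound _ _) _; apply: ler_wpM2l => //.
  have := hp0 j; rewrite -/a; have := ltW r0. nra.
lra.
Qed.


Lemma sum_pos n (f : 'I_n -> R) (i : 'I_n) : (forall j, 0 < f j) -> 0 < \sum_j f j.
Proof.
move=> hf; rewrite (bigD1 i) //=; apply: (lt_le_trans (hf i)).
rewrite lerDl; apply: sumr_ge0 => j _; exact: ltW.
Qed.

Lemma attnP_ge0 d n (A : 'M[R]_d) (Z : 'I_n -> 'cV[R]_d) i j : 0 <= attnP A Z i j.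
Proof.
rewrite /attnP; apply: divr_ge0; first exact: ltW (expR_gt0 _).
by apply: sumr_ge0 => l _; exact: ltW (expR_gt0 _).
Qed.

Lemma attnP_sum1 d n (A : 'M[R]_d) (Z : 'I_n -> 'cV[R]_d) i : \sum_j attnP A Z i j = 1.
Proof.
rewrite /attnP -mulr_suml mulfV //; apply: lt0r_neq0; apply: (sum_pos i) => j.
exact: expR_gt0.
Qed.

Lemma attnP_le1 d n (A : 'M[R]_d) (Z : 'I_n -> 'cV[R]_d) i j : attnP A Z i j <= 1.
Proof.
rewrite -(attnP_sum1 A Z i) (bigD1 j) //= lerDl; apply: sumr_ge0 => l _.
exact: attnP_ge0.
Qed.

Lemma cs_sqrt n (x y : 'I_n -> R) :
  \sum_i x i * y i <= Num.sqrt (\sum_i x i ^+ 2) * Num.sqrt (\sum_i y i ^+ 2).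
Proof.
have := @cs_w n (fun _ => 1) x y (fun _ => ler01).
under eq_bigr do rewrite mul1r.
under [X in _ <= X * _]eq_bigr do rewrite mul1r.
under [X in _ <= _ * X]eq_bigr do rewrite mul1r.
move=> h; apply: le_trans (ler_norm _) _.
rewrite -sqrtr_sqr -sqrtrM ?ler_sqrt //.
  by apply: mulr_ge0; apply: sumr_ge0 => i _; exact: sqr_ge0.
by apply: sumr_ge0 => i _; exact: sqr_ge0.
Qed.

Lemma total_bound d n (A : 'M[R]_d) (Z G H : 'I_n -> 'cV[R]_d) (r : R) :
  0 < r -> (forall j, vnorm (Z j) <= r) ->
  \sum_i \sum_j (attnP A Z i j * dot (G i) (H j) + dot (G i) (Z j) *
     (attnP A Z i j * ((dot (A *m H i) (Z j) + dot (A *m Z i) (H j)) -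
       \sum_l attnP A Z i l * (dot (A *m H i) (Z l) + dot (A *m Z i) (H l)))))
  <= frob G * (Num.sqrt 3 * Num.sqrt (specnorm A ^+ 2 * r ^+ 4 * (4 * n%:R + 1) + n%:R)
     * frob H).
Proof.
move=> r0 hZ.
set a := specnorm A.
have a0 : 0 <= a := specnorm_ge0 A.
set FH2 := \sum_j vnorm (H j) ^+ 2.
have FH0 : 0 <= FH2 by apply: sumr_ge0 => j _; exact: sqr_ge0.
set t1 := fun i => \sum_j attnP A Z i j * vnorm (H j).
set T := fun i => t1 i + a * r ^+ 2 * vnorm (H i) + 2 * a * r ^+ 2 * t1 i.
apply: le_trans (_ : \sum_i vnorm (G i) * T i <= _).
  apply: ler_sum => i _.
  apply: (@row_bound d n (attnP A Z i) Z H (G i) (H i) (Z i) A r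
            (fun j => dot (A *m H i) (Z j) + dot (A *m Z i) (H j))) => //.
  - exact: attnP_ge0.
  - exact: attnP_sum1.
apply: le_trans (cs_sqrt _ _) _.
rewrite /frob -mulrA; apply: ler_wpM2l; first exact: sqrtr_ge0.
have t1b : forall i, t1 i ^+ 2 <= FH2.
  move=> i; have := @cs_w n (attnP A Z i) (fun _ => 1) (fun j => vnorm (H j))
                      (fun j => attnP_ge0 A Z i j).
  under eq_bigr do rewrite mulr1.
  under [X in _ <= X * _]eq_bigr do rewrite expr1n mulr1.
  rewrite attnP_sum1 mul1r => h; apply: le_trans h _.
  apply: ler_sum => j _; rewrite -[X in _ <= X]mul1r; apply: ler_wpM2r.
    exact: sqr_ge0.
  exact: attnP_le1.
have t10 : forall i, 0 <= t1 i.
  by move=> i; apply: sumr_ge0 => j _; apply: mulr_ge0; [exact: attnP_ge0 | exact: vnorm_ge0].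
have Tb : forall i, T i ^+ 2 <= 3 * (FH2 + a ^+ 2 * r ^+ 4 * vnorm (H i) ^+ 2
                                        + 4 * a ^+ 2 * r ^+ 4 * FH2).
  move=> i; rewrite /T.
  set x := t1 i; set y := a * r ^+ 2 * vnorm (H i).
  have hx := t1b i.
  have e : a ^+ 2 * r ^+ 4 * vnorm (H i) ^+ 2 = y ^+ 2 by rewrite /y; ring.
  rewrite e.
  have h4 : (2 * a * r ^+ 2 * x) ^+ 2 <= 4 * a ^+ 2 * r ^+ 4 * FH2.
    have -> : (2 * a * r ^+ 2 * x) ^+ 2 = 4 * a ^+ 2 * r ^+ 4 * x ^+ 2 by ring.
    apply: ler_wpM2l => //; apply: mulr_ge0; [apply: mulr_ge0 => //; exact: sqr_ge0|].
    by apply: exprn_ge0; exact: ltW.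
  set z := 2 * a * r ^+ 2 * x in h4 *.
  have : (x + y + z) ^+ 2 <= 3 * (x ^+ 2 + y ^+ 2 + z ^+ 2).
    rewrite -subr_ge0.
    have -> : 3 * (x ^+ 2 + y ^+ 2 + z ^+ 2) - (x + y + z) ^+ 2 =
      (x - y) ^+ 2 + (y - z) ^+ 2 + (x - z) ^+ 2 by ring.
    by apply: addr_ge0; [apply: addr_ge0|]; exact: sqr_ge0.
  move=> h; apply: le_trans h _; rewrite ler_wpM2l //.
  apply: lerD => //; rewrite lerD2r; exact: hx.
apply: le_trans (_ : Num.sqrt (\sum_i 3 * (FH2 + a ^+ 2 * r ^+ 4 * vnorm (H i) ^+ 2
                                        + 4 * a ^+ 2 * r ^+ 4 * FH2)) <= _).
  rewrite ler_sqrt; first by apply: ler_sum => i _; exact: Tb.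
  apply: sumr_ge0 => i _; apply: mulr_ge0 => //.
  apply: addr_ge0; [apply: addr_ge0 => //|]; apply: mulr_ge0 => //; try exact: sqr_ge0.
    by apply: mulr_ge0; [exact: sqr_ge0 | apply: exprn_ge0; exact: ltW].
  by apply: mulr_ge0; [apply: mulr_ge0 => //; exact: sqr_ge0 | apply: exprn_ge0; exact: ltW].
have -> : \sum_i 3 * (FH2 + a ^+ 2 * r ^+ 4 * vnorm (H i) ^+ 2 + 4 * a ^+ 2 * r ^+ 4 * FH2)
   = 3 * ((a ^+ 2 * r ^+ 4 * (4 * n%:R + 1) + n%:R) * FH2).
  rewrite -mulr_sumr big_split big_split /= -mulr_sumr !sumr_const card_ord -/FH2.
  ring.
rewrite sqrtrM // sqrtrM ?mulrA //.
apply: addr_ge0; last exact: ler0n.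
have r0' := ltW r0; have a2 := sqr_ge0 a.
have n0 : 0 <= 4 * n%:R + 1 :> R by apply: addr_ge0 => //; apply: mulr_ge0 => //; exact: ler0n.
by repeat (apply: mulr_ge0 => //).
Qed.


Lemma D_sum n (h : 'I_n -> R -> R) (dh : 'I_n -> R) (x : R) :
  (forall i, is_derive x 1 (h i) (dh i)) ->
  is_derive x 1 (fun t => \sum_i h i t) (\sum_i dh i).
Proof.
move=> hd; have -> : (fun t => \sum_i h i t) = \sum_i h i by rewrite fct_sumE.
exact: is_derive_sum.
Qed.

Lemma D_mul (f g : R -> R) (df dg x : R) :
  is_derive x 1 f df -> is_derive x 1 g dg ->
  is_derive x 1 (fun t => f t * g t) (f x * dg + g x * df).
Proof.
move=> hf hg; have -> : (fun t => f t * g t) = f * g by apply: funext.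
exact: is_deriveM.
Qed.

Lemma D_inv (f : R -> R) (df x : R) : f x != 0 -> is_derive x 1 f df ->
  is_derive x 1 (fun t => (f t)^-1) (- (f x) ^- 2 * df).
Proof. by move=> h1 h2; apply: is_deriveV. Qed.

Lemma D_exp (f : R -> R) (df x : R) : is_derive x 1 f df ->
  is_derive x 1 (fun t => expR (f t)) (expR (f x) * df).
Proof.
move=> hf; have -> : (fun t => expR (f t)) = expR \o f by [].
by apply: is_derive1_comp.
Qed.

Lemma D_add (f g : R -> R) (df dg x : R) :
  is_derive x 1 f df -> is_derive x 1 g dg ->
  is_derive x 1 (fun t => f t + g t) (df + dg).
Proof.
move=> hf hg; have -> : (fun t => f t + g t) = f + g by apply: funext.
exact: is_deriveD.
Qed.

Lemma D_cst (c x : R) : is_derive x 1 (fun _ : R => c) 0.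
Proof. exact: is_derive_cst. Qed.

Lemma D_id (x : R) : is_derive x 1 (fun t : R => t) 1.
Proof. exact: is_derive_id. Qed.

Lemma D_dot m (u0 u1 v0 v1 : 'cV[R]_m) (x : R) :
  is_derive x 1 (fun t => dot (u0 + t *: u1) (v0 + t *: v1))
    (dot u1 (v0 + x *: v1) + dot (u0 + x *: u1) v1).
Proof.
have -> : (fun t => dot (u0 + t *: u1) (v0 + t *: v1)) =
  (fun t => dot u0 v0 + t * (dot u1 v0 + dot u0 v1) + t * (t * dot u1 v1)).
  apply: funext => t; rewrite !dotDl !dotDr !dotZl !dotZr; ring.
have h := D_add (D_add (D_cst (dot u0 v0) x)
   (D_mul (D_id x) (D_cst (dot u1 v0 + dot u0 v1) x)))
   (D_mul (D_id x) (D_mul (D_id x) (D_cst (dot u1 v1) x))).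
apply: (is_derive_eq h).
rewrite !dotDl !dotDr !dotZl !dotZr /=; ring.
Qed.


Definition Zt d n (Y H : 'I_n -> 'cV[R]_d) (t : R) : 'I_n -> 'cV[R]_d :=
  fun j => Y j + t *: H j.

Lemma bil_dot d (A : 'M[R]_d) (u v : 'cV[R]_d) :
  ((u^T *m A^T *m v) 0 0) = dot (A *m u) v.
Proof.
rewrite -trmx_mul mxE /dot; apply: eq_bigr => l _; by rewrite !mxE.
Qed.

Lemma soft_deriv n (e s' : 'I_n -> R) j : \sum_l e l != 0 ->
  e j * (- (\sum_l e l) ^- 2 * \sum_l (e l * s' l)) + (\sum_l e l)^-1 * (e j * s' j)
  = e j / (\sum_l e l) * (s' j - \sum_l e l / (\sum_l' e l') * s' l).
Proof.
set S := \sum_l e l => hS.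
have -> : \sum_l e l / S * s' l = S^-1 * \sum_l e l * s' l.
  by rewrite mulr_sumr; apply: eq_bigr => l _; rewrite mulrAC mulrC.
by field.
Qed.

Lemma attn_deriv d n (A : 'M[R]_d) (Y H : 'I_n -> 'cV[R]_d) i j (x : R) :
  is_derive x 1 (fun t => attnP A (Zt Y H t) i j)
   (attnP A (Zt Y H x) i j * ((dot (A *m H i) (Zt Y H x j) + dot (A *m Zt Y H x i) (H j))
     - \sum_l attnP A (Zt Y H x) i l *
         (dot (A *m H i) (Zt Y H x l) + dot (A *m Zt Y H x i) (H l)))).
Proof.
set q := fun t l => dot (A *m Y i + t *: (A *m H i)) (Y l + t *: H l).
have hq : forall t l, ((Zt Y H t i)^T *m A^T *m Zt Y H t l) 0 0 = q t l.
  by move=> t l; rewrite bil_dot /Zt mulmxDr -scalemxAr.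
have eP : forall t l, attnP A (Zt Y H t) i l = expR (q t l) / \sum_l' expR (q t l').
  by move=> t l; rewrite /attnP hq; congr (_ / _); apply: eq_bigr => l' _; rewrite hq.
have -> : (fun t => attnP A (Zt Y H t) i j) =
          (fun t => expR (q t j) * (\sum_l expR (q t l))^-1).
  by apply: funext => t; rewrite eP.
have Spos : 0 < \sum_l expR (q x l) by apply: (sum_pos i) => l; exact: expR_gt0.
apply: is_derive_eq.
  apply: D_mul; first by apply: D_exp; exact: D_dot.
  apply: D_inv; first exact: lt0r_neq0.
  by apply: D_sum => l; apply: D_exp; exact: D_dot.
have hA : A *m Zt Y H x i = A *m Y i + x *: (A *m H i) by rewrite /Zt mulmxDr -scalemxAr.
have hs := @soft_deriv _ (fun l => expR (q x l))
   (fun l => dot (A *m H i) (Y l + x *: H l) + dot (A *m Y i + x *: (A *m H i)) (H l))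
   j (lt0r_neq0 Spos).
rewrite hA !eP /Zt; move: hs => /= ->.
congr (_ * (_ - _)); apply: eq_bigr => l _; congr (_ * _).
by rewrite -(eP x l).
Qed.


Lemma D_dotr m (g v0 v1 : 'cV[R]_m) (x : R) :
  is_derive x 1 (fun t => dot g (v0 + t *: v1)) (dot g v1).
Proof.
have -> : (fun t => dot g (v0 + t *: v1)) = (fun t => dot g v0 + t * dot g v1).
  by apply: funext => t; rewrite dotDr dotZr.
have h := D_add (D_cst (dot g v0) x) (D_mul (D_id x) (D_cst (dot g v1) x)).
apply: (is_derive_eq h).
rewrite /=; ring.
Qed.

Lemma phi_deriv d n (A : 'M[R]_d) (G Y H : 'I_n -> 'cV[R]_d) (x : R) :
  is_derive x 1 (fun t => \sum_i \sum_j attnP A (Zt Y H t) i j * dot (G i) (Zt Y H t j))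
   (\sum_i \sum_j (attnP A (Zt Y H x) i j * dot (G i) (H j) + dot (G i) (Zt Y H x j) *
     (attnP A (Zt Y H x) i j * ((dot (A *m H i) (Zt Y H x j) + dot (A *m Zt Y H x i) (H j))
     - \sum_l attnP A (Zt Y H x) i l *
         (dot (A *m H i) (Zt Y H x l) + dot (A *m Zt Y H x i) (H l)))))).
Proof.
apply: D_sum => i; apply: D_sum => j.
apply: D_mul; first exact: attn_deriv.
exact: D_dotr.
Qed.

End Helpers.

Theorem mainTheorem1 (R : realType) (k d n : nat) (Q K V : 'M[R]_(k, d)) (r : R)
  (hr : 0 < r) :
  let A : 'M[R]_d := (Num.sqrt (k%:R))^-1 *: (K^T *m Q) in
  forall X Y : 'I_n -> 'cV[R]_d,
    (forall i, vnorm (X i) <= r) -> (forall i, vnorm (Y i) <= r) ->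
    frob (fun i => selfattn A V X i - selfattn A V Y i) <=
      Num.sqrt 3 * specnorm V *
      Num.sqrt (specnorm A ^+ 2 * r ^+ 4 * (4 * n%:R + 1) + n%:R) *
      frob (fun i => X i - Y i).
Proof.
move=> A X Y hX hY.
set C := Num.sqrt (specnorm A ^+ 2 * r ^+ 4 * (4 * n%:R + 1) + n%:R).
set H := fun i => X i - Y i.
set gs := fun (Z : 'I_n -> 'cV[R]_d) i => \sum_j attnP A Z i j *: Z j.
set G := fun i => gs X i - gs Y i.
have frob0 : forall (F : 'I_n -> 'cV[R]_d), 0 <= frob F.
  by move=> F; exact: sqrtr_ge0.
have C0 : 0 <= C by exact: sqrtr_ge0.
have step2 : frob G <= Num.sqrt 3 * C * frob H.
  set phi := fun t => \sum_i \sum_j attnP A (Zt Y H t) i j * dot (G i) (Zt Y H t j).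
  have Z1 : Zt Y H 1 = X by apply: funext => j; rewrite /Zt scale1r /H addrC subrK.
  have Z0 : Zt Y H 0 = Y by apply: funext => j; rewrite /Zt scale0r addr0.
  have phiE : forall t, phi t = \sum_i dot (G i) (gs (Zt Y H t) i).
    move=> t; apply: eq_bigr => i _; rewrite /gs dot_sumr.
    by apply: eq_bigr => j _; rewrite dotZr.
  have hdiff : phi 1 - phi 0 = frob G ^+ 2.
    rewrite !phiE Z1 Z0 -sumrB /frob sqr_sqrtr; last first.
      by apply: sumr_ge0 => i _; exact: sqr_ge0.
    by apply: eq_bigr => i _; rewrite -dotBr vnorm_sq.
  have hd := fun x => @phi_deriv _ _ _ A G Y H x.
  have [c c01 hmvt] := @MVT R phi _ 0 1 ltr01 (fun x _ => hd x)
    (derivable_within_continuous (fun x _ => @ex_derive _ _ _ _ _ _ _ (hd x))).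
  rewrite subr0 mulr1 hdiff in hmvt.
  have hc : 0 < c < 1 by move: c01; rewrite in_itv /=.
  have hZ : forall j, vnorm (Zt Y H c j) <= r.
    move=> j; have -> : Zt Y H c j = (1 - c) *: Y j + c *: X j.
      by apply/matrixP => a b; rewrite /Zt /H !mxE; ring.
    apply: le_trans (vnormD _ _) _; rewrite !vnormZ !ger0_norm; try lra.
    have := hX j; have := hY j; case/andP: hc => c0 c1; nra.
  have := @total_bound _ _ _ A (Zt Y H c) G H r hr hZ.
  rewrite -hmvt -/C => hb.
  have [G0|Gn0] := eqVneq (frob G) 0.
    by rewrite G0; apply: mulr_ge0; [apply: mulr_ge0 => //; exact: sqrtr_ge0 | exact: frob0].
  have Gp : 0 < frob G by rewrite lt_def Gn0 frob0.
  by rewrite -(ler_pM2l Gp) -expr2.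
have step1 : frob (fun i => selfattn A V X i - selfattn A V Y i) <= specnorm V * frob G.
  have sV := specnorm_ge0 V.
  rewrite /frob -(ger0_norm sV) -sqrtr_sqr -sqrtrM ?sqr_ge0 // ler_sqrt; last first.
    by apply: mulr_ge0; [exact: sqr_ge0 | apply: sumr_ge0 => i _; exact: sqr_ge0].
  rewrite mulr_sumr; apply: ler_sum => i _.
  have -> : selfattn A V X i - selfattn A V Y i = V *m G i by rewrite /selfattn -mulmxBr.
  rewrite -exprMn !expr2; apply: ler_pM; try exact: vnorm_ge0; exact: specnorm_bound.
apply: le_trans step1 _.
have -> : Num.sqrt 3 * specnorm V * C * frob H = specnorm V * (Num.sqrt 3 * C * frob H) by ring.
apply: ler_wpM2l => //; exact: specnorm_ge0.
Qed.
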